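(* Let $X$ be a metric space, $Y$ a complete metric space, and $f_0\colon X \to Y$ an embedding such that $f_0^{-1}\colon f_0(X) \to X$ is uniformly continuous; put $Y_0 = f_0(X)$. Consider the infinite two-player game in which, for each move number $k \geq 1$: Player I chooses a number $\varepsilon_k > 0$ (possibly depending on all previous moves); then Player II chooses a map $g_k\colon Y_{k-1} \to Y$ which is an embedding, satisfies $d_Y(g_k(y), y) < \varepsilon_k$ for all $y \in Y_{k-1}$, and has uniformly continuous inverse $g_k^{-1}\colon g_k(Y_{k-1}) \to Y_{k-1}$; one then sets $f_k = g_k \circ f_{k-1}$ and $Y_k = g_k(Y_{k-1}) = f_k(X)$. Player I wins if the pointwise limit $f = \lim_{k\to\infty} f_k\colon X \to Y$ exists and is an embedding of $X$ into $Y$. Then Player I has a winning strategy.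
   Context: An embedding is a continuous injective map that is a homeomorphism onto its image. *)

(* Defs.v *)
From Stdlib Require Export Reals List.
Open Scope R_scope.

Notation MS := Metric_Space.
Notation pt := Base.
Notation d := dist.

Definition cauchy_seq {Y : MS} (u : nat -> pt Y) : Prop :=
  forall e, 0 < e -> exists N, forall m n, (N <= m)%nat -> (N <= n)%nat ->
    d Y (u m) (u n) < e.

Definition seq_converges_to {Y : MS} (u : nat -> pt Y) (l : pt Y) : Prop :=
  forall e, 0 < e -> exists N, forall n, (N <= n)%nat -> d Y (u n) l < e.

Definition complete (Y : MS) : Prop :=
  forall u : nat -> pt Y, cauchy_seq u -> exists l, seq_converges_to u l.

Definition continuous_on {A B : MS} (S : pt A -> Prop) (h : pt A -> pt B) : Prop :=
  forall x, S x -> forall e, 0 < e -> exists de, 0 < de /\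
    forall x', S x' -> d A x x' < de -> d B (h x) (h x') < e.

Definition injective_on {A B : MS} (S : pt A -> Prop) (h : pt A -> pt B) : Prop :=
  forall x x', S x -> S x' -> h x = h x' -> x = x'.

Definition inverse_continuous_on {A B : MS} (S : pt A -> Prop) (h : pt A -> pt B) : Prop :=
  forall x, S x -> forall e, 0 < e -> exists de, 0 < de /\
    forall x', S x' -> d B (h x) (h x') < de -> d A x x' < e.

Definition inverse_unif_continuous_on {A B : MS} (S : pt A -> Prop) (h : pt A -> pt B) : Prop :=
  forall e, 0 < e -> exists de, 0 < de /\
    forall x x', S x -> S x' -> d B (h x) (h x') < de -> d A x x' < e.

Definition embedding_on {A B : MS} (S : pt A -> Prop) (h : pt A -> pt B) : Prop :=
  continuous_on S h /\ injective_on S h /\ inverse_continuous_on S h.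

Definition embedding {A B : MS} (h : pt A -> pt B) : Prop :=
  embedding_on (fun _ => True) h.

Definition image {A B : Type} (h : A -> B) : B -> Prop :=
  fun y => exists x, h x = y.

(* A move of Player II is represented by a map Y -> Y; only its restriction to
   the current set Y_{k-1} matters (all conditions refer to that restriction). *)

(* f_k, with moves indexed from 0: g 0 is the first move g_1. *)
Fixpoint fk {X Y : MS} (f0 : pt X -> pt Y) (g : nat -> pt Y -> pt Y) (k : nat)
  : pt X -> pt Y :=
  match k with
  | O => f0
  | S k' => fun x => g k' (fk f0 g k' x)
  end.

Definition history {Y : MS} (g : nat -> pt Y -> pt Y) (k : nat) : list (pt Y -> pt Y) :=
  map g (seq 0 k).

(* A strategy of Player I: positive number as a function of the previous moves
   of Player II (Player I's own previous moves are determined by these). *)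
Definition strategyI (Y : MS) : Type := list (pt Y -> pt Y) -> R.

Definition legal_move {Y : MS} (Ycur : pt Y -> Prop) (eps : R) (gk : pt Y -> pt Y) : Prop :=
  embedding_on Ycur gk /\
  (forall y, Ycur y -> d Y (gk y) y < eps) /\
  inverse_unif_continuous_on Ycur gk.

Definition play_follows {X Y : MS} (f0 : pt X -> pt Y) (sigma : strategyI Y)
  (g : nat -> pt Y -> pt Y) : Prop :=
  forall k, legal_move (image (fk f0 g k)) (sigma (history g k)) (g k).

Definition player_I_wins {X Y : MS} (f0 : pt X -> pt Y) (g : nat -> pt Y -> pt Y) : Prop :=
  exists f : pt X -> pt Y,
    (forall x, seq_converges_to (fun k => fk f0 g k x) (f x)) /\ embedding f.

(* Main.v *)
Require Import Defs.
From Stdlib Require Import Reals List.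
From Stdlib Require Import Lra Lia ClassicalEpsilon Classical.
Open Scope R_scope.

Definition compose {X Y : MS} (f0 : pt X -> pt Y) (L : list (pt Y -> pt Y)) (x : pt X) : pt Y :=
  fold_left (fun y h => h y) L (f0 x).

Lemma hist_S {Y : MS} (g : nat -> pt Y -> pt Y) k :
  history g (S k) = history g k ++ (g k :: nil).
Proof. unfold history. rewrite seq_S, map_app. reflexivity. Qed.

Lemma hist_len {Y : MS} (g : nat -> pt Y -> pt Y) k : length (history g k) = k.
Proof. unfold history. rewrite length_map, length_seq. reflexivity. Qed.

Lemma compose_fk {X Y : MS} f0 (g : nat -> pt Y -> pt Y) k (x : pt X) :
  compose f0 (history g k) x = fk f0 g k x.
Proof.
  induction k; simpl; [reflexivity|].
  rewrite hist_S. unfold compose in *. rewrite fold_left_app. simpl. rewrite IHk. reflexivity.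
Qed.

Lemma firstn_hist {Y : MS} (g : nat -> pt Y -> pt Y) j k :
  (j <= k)%nat -> firstn j (history g k) = history g j.
Proof.
  induction k; intros H.
  - assert (j = 0%nat) by lia. subst. reflexivity.
  - destruct (Nat.eq_dec j (S k)) as [->|Hn].
    + apply firstn_all2. rewrite hist_len. lia.
    + rewrite hist_S, firstn_app, hist_len.
      replace (j - k)%nat with 0%nat by lia. simpl. rewrite app_nil_r. apply IHk. lia.
Qed.

Definition Pgood {X Y : MS} (f0 : pt X -> pt Y) (L : list (pt Y -> pt Y)) (de : R) : Prop :=
  forall x x', d Y (compose f0 L x) (compose f0 L x') < de -> d X x x' < (/2) ^ length L.

Definition Dch {X Y : MS} (f0 : pt X -> pt Y) L : R :=
  epsilon (inhabits 1) (fun de => 0 < de /\ (Pgood f0 L de \/ ~ exists de', 0 < de' /\ Pgood f0 L de')).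

Lemma Dch_spec {X Y: MS} (f0 : pt X -> pt Y) L :
  0 < Dch f0 L /\ (Pgood f0 L (Dch f0 L) \/ ~ exists de', 0 < de' /\ Pgood f0 L de').
Proof.
  unfold Dch. apply epsilon_spec.
  destruct (classic (exists de', 0 < de' /\ Pgood f0 L de')) as [[de [H1 H2]]|H].
  - exists de; auto.
  - exists 1; split; [lra| auto].
Qed.

Fixpoint Mn {X Y : MS} (f0 : pt X -> pt Y) (L : list (pt Y -> pt Y)) (n : nat) : R :=
  match n with
  | O => Rmin 1 (Dch f0 (firstn 0 L))
  | S n' => Rmin (Mn f0 L n') (Dch f0 (firstn (S n') L))
  end.

Lemma Mn_pos {X Y : MS} (f0 : pt X -> pt Y) L n : 0 < Mn f0 L n.
Proof.
  induction n; simpl; apply Rmin_pos; try lra; try apply IHn; apply Dch_spec.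
Qed.

Lemma Mn_ext {X Y : MS} (f0 : pt X -> pt Y) L L' n :
  (forall j, (j <= n)%nat -> firstn j L = firstn j L') -> Mn f0 L n = Mn f0 L' n.
Proof.
  induction n; intros H; cbn [Mn].
  - reflexivity.
  - rewrite IHn by (intros; apply H; lia). rewrite (H (S n)); auto.
Qed.

Definition sigma0 {X Y : MS} (f0 : pt X -> pt Y) : strategyI Y :=
  fun L => Mn f0 L (length L) * (/2) ^ (length L + 3).

Lemma half_pow_pos n : 0 < (/2) ^ n.
Proof. apply pow_lt. lra. Qed.

Lemma half_pow_le1 n : (/2) ^ n <= 1.
Proof. induction n; simpl; [lra|]. pose proof (half_pow_pos n). lra. Qed.

Lemma half_pow_add2 n : (/2) ^ (n + 2) = (/2) ^ n * / 4.
Proof. rewrite pow_add. simpl. field. Qed.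

Lemma half_pow_small e : 0 < e -> exists N, (/2) ^ N < e.
Proof.
  intros He. destruct (pow_lt_1_zero (/2)) with (y := e) as [N HN]; auto.
  - rewrite Rabs_right; lra.
  - exists N. specialize (HN N (le_n _)). rewrite Rabs_right in HN; auto.
    left; apply half_pow_pos.
Qed.

Section Main.
Context (X Y : MS) (f0 : pt X -> pt Y) (Hf0 : embedding f0)
  (Hf0u : inverse_unif_continuous_on (fun _ => True) f0)
  (g : nat -> pt Y -> pt Y) (Hg : play_follows f0 (sigma0 f0) g).

Definition F k := fk f0 g k.
Definition m k := Mn f0 (history g k) k.

Lemma m_eq k : Mn f0 (history g k) (length (history g k)) = m k.
Proof. rewrite hist_len. reflexivity. Qed.

Lemma eps_eq k : sigma0 f0 (history g k) = m k * (/2) ^ (k + 3).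
Proof. unfold sigma0. rewrite m_eq, hist_len. reflexivity. Qed.

Lemma m_S k : m (S k) = Rmin (m k) (Dch f0 (history g (S k))).
Proof.
  unfold m. cbn [Mn]. rewrite (firstn_all2 (n := S k)) by (rewrite hist_len; lia).
  f_equal. apply Mn_ext. intros j Hj. rewrite !firstn_hist by lia. reflexivity.
Qed.

Lemma m_pos k : 0 < m k.
Proof. apply Mn_pos. Qed.

Lemma m_le1 k : m k <= 1.
Proof.
  induction k.
  - unfold m. simpl. apply Rmin_l.
  - rewrite m_S. eapply Rle_trans; [apply Rmin_l|auto].
Qed.

Lemma m_le_D k : m k <= Dch f0 (history g k).
Proof.
  destruct k.
  - unfold m. simpl. apply Rmin_r.
  - rewrite m_S. apply Rmin_r.
Qed.

Lemma m_mono k n : m (k + n) <= m k.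
Proof.
  induction n.
  - rewrite Nat.add_0_r. lra.
  - rewrite Nat.add_succ_r, m_S. eapply Rle_trans; [apply Rmin_l|auto].
Qed.

Lemma step_close k x : d Y (F (S k) x) (F k x) < m k * (/2) ^ (k + 3).
Proof.
  rewrite <- eps_eq. destruct (Hg k) as [_ [H _]]. apply H. exists x. reflexivity.
Qed.

Lemma F_cont k : continuous_on (fun _ => True) (F k).
Proof.
  induction k.
  - apply Hf0.
  - intros x _ e He. destruct (Hg k) as [[Hc _] _].
    destruct (Hc (F k x) (ex_intro _ x eq_refl) e He) as [de1 [Hde1 H1]].
    destruct (IHk x I de1 Hde1) as [de2 [Hde2 H2]].
    exists de2. split; auto. intros x' _ Hx'. simpl.
    apply H1; [exists x'; reflexivity| apply H2; auto].
Qed.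

Lemma F_invuc k e : 0 < e -> exists de, 0 < de /\
  forall x x', d Y (F k x) (F k x') < de -> d X x x' < e.
Proof.
  revert e. induction k; intros e He.
  - destruct (Hf0u e He) as [de [Hde H]]. exists de; split; auto.
  - destruct (IHk e He) as [de [Hde H]].
    destruct (Hg k) as [_ [_ Hu]].
    destruct (Hu de Hde) as [de' [Hde' H']]. exists de'; split; auto.
    intros x x' Hd. apply H. apply H'; try (eexists; reflexivity). exact Hd.
Qed.

Lemma D_good k : forall x x', d Y (F k x) (F k x') < Dch f0 (history g k) -> d X x x' < (/2) ^ k.
Proof.
  destruct (Dch_spec f0 (history g k)) as [_ [HP|HN]].
  - intros x x' Hd. unfold Pgood in HP. rewrite hist_len in HP. apply HP.
    rewrite !compose_fk. exact Hd.
  - exfalso. apply HN. destruct (F_invuc k ((/2) ^ k) (half_pow_pos k)) as [de [Hde H]].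
    exists de. split; auto. intros x x' Hd. rewrite hist_len. apply H.
    rewrite !compose_fk in Hd. exact Hd.
Qed.

Lemma bound k n x : d Y (F (k + n) x) (F k x) <= m k * (/2) ^ (k + 2) - m k * (/2) ^ (k + n + 2).
Proof.
  induction n.
  - rewrite Nat.add_0_r. rewrite (proj2 (dist_refl Y _ _) eq_refl). lra.
  - rewrite Nat.add_succ_r.
    pose proof (dist_tri Y (F (S (k + n)) x) (F k x) (F (k + n) x)) as Ht.
    pose proof (step_close (k + n) x) as Hs.
    pose proof (m_mono k n) as Hm.
    pose proof (half_pow_pos (k + n + 2)) as Hp.
    replace (k + n + 3)%nat with (S (k + n + 2)) in Hs by lia.
    replace (S (k + n) + 2)%nat with (S (k + n + 2)) by lia.
    simpl in Hs |- *.
    assert (m (k + n) * (/ 2 * (/ 2) ^ (k + n + 2)) <= m k * (/ 2 * (/ 2) ^ (k + n + 2))).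
    { apply Rmult_le_compat_r; nra. }
    nra.
Qed.

Lemma bound' k n x : d Y (F (k + n) x) (F k x) <= m k * (/2) ^ (k + 2).
Proof.
  pose proof (bound k n x). pose proof (m_pos k). pose proof (half_pow_pos (k + n + 2)). nra.
Qed.

Lemma r_small k : m k * (/2) ^ (k + 2) <= (/2) ^ k / 4.
Proof.
  rewrite half_pow_add2. pose proof (m_le1 k). pose proof (m_pos k).
  pose proof (half_pow_pos k). nra.
Qed.

Lemma cauchy x : cauchy_seq (fun k => F k x).
Proof.
  intros e He. destruct (half_pow_small e He) as [N HN]. exists N.
  intros p q Hp Hq.
  pose proof (bound' N (p - N) x) as B1. pose proof (bound' N (q - N) x) as B2.
  replace (N + (p - N))%nat with p in B1 by lia.
  replace (N + (q - N))%nat with q in B2 by lia.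
  pose proof (r_small N).
  pose proof (dist_tri Y (F p x) (F q x) (F N x)).
  rewrite (dist_sym Y (F N x) (F q x)) in H0. pose proof (half_pow_pos N). lra.
Qed.

Hypothesis HY : complete Y.

Definition flim (x : pt X) : pt Y :=
  epsilon (inhabits (f0 x)) (fun l => seq_converges_to (fun k => F k x) l).

Lemma flim_spec x : seq_converges_to (fun k => F k x) (flim x).
Proof. unfold flim. apply epsilon_spec. apply HY. apply cauchy. Qed.

Lemma flim_close k x : d Y (flim x) (F k x) <= m k * (/2) ^ (k + 2).
Proof.
  apply Rnot_lt_le. intros Hlt.
  destruct (flim_spec x (d Y (flim x) (F k x) - m k * (/2) ^ (k + 2))) as [N HN]; [lra|].
  specialize (HN (k + N)%nat ltac:(lia)). simpl in HN.
  pose proof (bound' k N x).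
  pose proof (dist_tri Y (flim x) (F k x) (F (k + N) x)).
  rewrite (dist_sym Y (flim x) (F (k+N) x)) in H0. lra.
Qed.

Lemma key N x x' : d Y (flim x) (flim x') < m N / 2 -> d X x x' < (/2) ^ N.
Proof.
  intros Hd. apply D_good.
  pose proof (m_le_D N).
  pose proof (flim_close N x). pose proof (flim_close N x').
  pose proof (dist_tri Y (F N x) (F N x') (flim x)).
  pose proof (dist_tri Y (flim x) (F N x') (flim x')).
  rewrite (dist_sym Y (F N x) (flim x)) in H2.
  rewrite half_pow_add2 in H0, H1.
  pose proof (m_pos N). pose proof (half_pow_pos N).
  pose proof (half_pow_le1 N).
  assert (m N * ((/2)^N * /4) <= m N * (1 * /4)) by (apply Rmult_le_compat_l; lra).
  lra.
Qed.

Lemma flim_embedding : embedding flim.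
Proof.
  split; [|split].
  - intros x _ e He.
    destruct (half_pow_small (e/3)) as [N HN]; [lra|].
    destruct (F_cont N x I (e/3)) as [de [Hde H]]; [lra|].
    exists de. split; auto. intros x' _ Hx.
    specialize (H x' I Hx).
    pose proof (flim_close N x). pose proof (flim_close N x'). pose proof (r_small N).
    pose proof (dist_tri Y (flim x) (flim x') (F N x)).
    pose proof (dist_tri Y (F N x) (flim x') (F N x')).
    rewrite (dist_sym Y (F N x') (flim x')) in H4.
    pose proof (half_pow_pos N). lra.
  - intros x x' _ _ Heq.
    destruct (classic (x = x')) as [|Hn]; auto. exfalso.
    assert (Hp : 0 < d X x x').
    { destruct (dist_pos X x x'); auto. exfalso. apply Hn. apply (dist_refl X). lra. }
    destruct (half_pow_small _ Hp) as [N HN].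
    assert (d X x x' < (/2) ^ N).
    { apply key. rewrite Heq, (proj2 (dist_refl Y _ _) eq_refl). pose proof (m_pos N). lra. }
    lra.
  - intros x _ e He. destruct (half_pow_small e He) as [N HN].
    exists (m N / 2). split; [pose proof (m_pos N); lra|].
    intros x' _ Hd. pose proof (key N x x' Hd). lra.
Qed.

End Main.

Theorem theorem3p1 (X Y : Metric_Space) (f0 : Base X -> Base Y) :
  complete Y ->
  embedding f0 ->
  inverse_unif_continuous_on (fun _ => True) f0 ->
  exists sigma : strategyI Y,
    (forall h, 0 < sigma h) /\
    forall g : nat -> Base Y -> Base Y,
      play_follows f0 sigma g -> player_I_wins f0 g.
Proof.
  intros HY Hf0 Hf0u. exists (sigma0 f0). split.
  - intros h. unfold sigma0. pose proof (Mn_pos f0 h (length h)).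
    pose proof (half_pow_pos (length h + 3)). nra.
  - intros g Hg. exists (flim X Y f0 g). split.
    + intros x. eapply flim_spec; eauto.
    + apply flim_embedding; auto.
Qed.
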